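(* (Darboux transformation.) Let $(\Omega(\mathcal{A}),\mathrm{d},\bar{\mathrm{d}})$ be a bidifferential graded algebra and let $\phi\in\mathcal{A}$ satisfy $\bar{\mathrm{d}}\,\mathrm{d}\,\phi=(\mathrm{d}\phi)(\mathrm{d}\phi)$. Let $\Delta'\in\mathcal{A}$ satisfy $\bar{\mathrm{d}}\Delta'=(\mathrm{d}\Delta')\Delta'$, let $\theta\in\mathcal{A}$ be invertible with $$\bar{\mathrm{d}}\theta=(\mathrm{d}\phi)\,\theta+(\mathrm{d}\theta)\,\Delta',$$ and let $C'\in\mathcal{A}$ with $\mathrm{d}C'=0$. Set $\phi':=\phi+\theta\Delta'\theta^{-1}-C'$. Then $$\bar{\mathrm{d}}(\theta\Delta'\theta^{-1})=(\mathrm{d}\phi')\,\theta\Delta'\theta^{-1}-\theta\Delta'\theta^{-1}\,\mathrm{d}\phi,$$ and $\phi'$ satisfies $\bar{\mathrm{d}}\,\mathrm{d}\,\phi'=(\mathrm{d}\phi')(\mathrm{d}\phi')$.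
   Context: $\mathcal{A}$ is a unital associative algebra over $\mathbb{C}$ with identity $I$. A bidifferential graded algebra $(\Omega(\mathcal{A}),\mathrm{d},\bar{\mathrm{d}})$ consists of a graded associative algebra $\Omega(\mathcal{A})=\bigoplus_{r\ge 0}\Omega^r(\mathcal{A})$ with $\Omega^0(\mathcal{A})=\mathcal{A}$ (each $\Omega^r(\mathcal{A})$ an $\mathcal{A}$-bimodule) together with two linear maps $\mathrm{d},\bar{\mathrm{d}}:\Omega^r(\mathcal{A})\to\Omega^{r+1}(\mathcal{A})$ satisfying the graded Leibniz rule $\mathrm{d}(\alpha\beta)=(\mathrm{d}\alpha)\beta+(-1)^r\alpha\,\mathrm{d}\beta$ for $\alpha\in\Omega^r(\mathcal{A})$ (and likewise for $\bar{\mathrm{d}}$), and $\mathrm{d}^2=\bar{\mathrm{d}}^2=0$, $\mathrm{d}\bar{\mathrm{d}}+\bar{\mathrm{d}}\mathrm{d}=0$. *)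

(* Defs.v *)
From HB Require Import structures.
From mathcomp Require Import all_boot all_order all_algebra.
Set Implicit Arguments. Unset Strict Implicit. Unset Printing Implicit Defensive.
Import Order.TTheory GRing.Theory Num.Theory.
Local Open Scope ring_scope.

(* A graded associative algebra Omega = (+)_{r>=0} Omega^r is represented by
   its total algebra [Om] (an associative unital K-algebra) together with the
   predicates [deg r] cutting out the homogeneous components Omega^r.
   Omega^0 = A is [deg 0].  The derivations d, dbar are the linear
   extensions of the maps Omega^r -> Omega^{r+1}. *)
Record bidga (K : fieldType) (Om : algType K) := BiDGA {
  deg : nat -> Om -> Prop;
  deg0 : forall r, deg r 0;
  degD : forall r x y, deg r x -> deg r y -> deg r (x + y);
  degZ : forall r (a : K) x, deg r x -> deg r (a *: x);
  degM : forall r s x y, deg r x -> deg s y -> deg (r + s)%N (x * y);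
  deg1 : deg 0 1;
  deg_span : forall x, exists (n : nat) (f : nat -> Om),
      (forall i, deg i (f i)) /\ x = \sum_(i < n) f i;
  deg_direct : forall (n : nat) (f : nat -> Om), (forall i, deg i (f i)) ->
      \sum_(i < n) f i = 0 -> forall i, (i < n)%N -> f i = 0;
  d : Om -> Om;
  db : Om -> Om;
  dD : forall x y, d (x + y) = d x + d y;
  dZ : forall (a : K) x, d (a *: x) = a *: d x;
  dbD : forall x y, db (x + y) = db x + db y;
  dbZ : forall (a : K) x, db (a *: x) = a *: db x;
  d_deg : forall r x, deg r x -> deg r.+1 (d x);
  db_deg : forall r x, deg r x -> deg r.+1 (db x);
  d_leibniz : forall r s x y, deg r x -> deg s y ->
      d (x * y) = d x * y + (-1) ^+ r *: (x * d y);
  db_leibniz : forall r s x y, deg r x -> deg s y ->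
      db (x * y) = db x * y + (-1) ^+ r *: (x * db y);
  dd : forall x, d (d x) = 0;
  dbdb : forall x, db (db x) = 0;
  d_db_anti : forall x, d (db x) + db (d x) = 0
}.

(* Main.v *)
Require Import Defs.
From HB Require Import structures.
From mathcomp Require Import all_boot all_order all_algebra.
Import GRing.Theory.
Local Open Scope ring_scope.

Set Implicit Arguments. Unset Strict Implicit.
Section S.
Variables (K : fieldType) (Om : algType K) (B : bidga Om).
Lemma selfadd (x : Om) : x = x + x -> x = 0.
Proof. by move=> h; apply: (addrI x); rewrite addr0 -h. Qed.
Lemma d0 : d B 0 = 0.
Proof. by apply: selfadd; rewrite -dD addr0. Qed.
Lemma db0 : db B 0 = 0.
Proof. by apply: selfadd; rewrite -dbD addr0. Qed.
Lemma dN x : d B (- x) = - d B x.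
Proof. by rewrite -scaleN1r dZ scaleN1r. Qed.
Lemma dbN x : db B (- x) = - db B x.
Proof. by rewrite -scaleN1r dbZ scaleN1r. Qed.
Lemma dB x y : d B (x - y) = d B x - d B y.
Proof. by rewrite dD dN. Qed.
Lemma dM0 s x y : deg B 0 x -> deg B s y -> d B (x * y) = d B x * y + x * d B y.
Proof. by move=> hx hy; rewrite (d_leibniz hx hy) expr0 scale1r. Qed.
Lemma dbM0 s x y : deg B 0 x -> deg B s y -> db B (x * y) = db B x * y + x * db B y.
Proof. by move=> hx hy; rewrite (db_leibniz hx hy) expr0 scale1r. Qed.
Lemma dM1 s x y : deg B 1 x -> deg B s y -> d B (x * y) = d B x * y - x * d B y.
Proof. by move=> hx hy; rewrite (d_leibniz hx hy) expr1 scaleN1r. Qed.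
Lemma d1 : d B 1 = 0.
Proof. by apply: selfadd; have := dM0 (deg1 B) (deg1 B); rewrite !mulr1 !mul1r; apply. Qed.
Lemma db1 : db B 1 = 0.
Proof. by apply: selfadd; have := dbM0 (deg1 B) (deg1 B); rewrite !mulr1 !mul1r; apply. Qed.
End S.

Theorem mainTheorem4 (K : fieldType) (Om : algType K) (B : bidga Om)
    (phi Dp theta thinv Cp : Om) :
  deg B 0 phi ->
  db B (d B phi) = d B phi * d B phi ->
  deg B 0 Dp ->
  db B Dp = d B Dp * Dp ->
  deg B 0 theta -> deg B 0 thinv -> theta * thinv = 1 -> thinv * theta = 1 ->
  db B theta = d B phi * theta + d B theta * Dp ->
  deg B 0 Cp ->
  d B Cp = 0 ->
  let phi' := phi + theta * Dp * thinv - Cp in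
  db B (theta * Dp * thinv) = d B phi' * (theta * Dp * thinv) - theta * Dp * thinv * d B phi
  /\ db B (d B phi') = d B phi' * d B phi'.
Proof.
move=> hp hdp hD hdD hT hTi hTTi hTiT hdT hC hdC phi'.
set a := d B phi.
have ha : deg B 1 a by exact: d_deg.
have hTD : deg B 0 (theta * Dp) by exact: (degM hT hD).
set X := theta * Dp * thinv.
have hX : deg B 0 X by exact: (degM hTD hTi).
have dTi : d B thinv = - (thinv * d B theta * thinv).
  have := dM0 hT hTi; rewrite hTTi d1 => /esym/eqP; rewrite addr_eq0 => /eqP E; have {}E := congr1 -%R E; rewrite opprK in E.
  by rewrite -[d B thinv]mul1r -hTiT -mulrA -E mulrN mulrA.
have dbTi : db B thinv = - (thinv * db B theta * thinv).
  have := dbM0 hT hTi; rewrite hTTi db1 => /esym/eqP; rewrite addr_eq0 => /eqP E; have {}E := congr1 -%R E; rewrite opprK in E.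
  by rewrite -[db B thinv]mul1r -hTiT -mulrA -E mulrN mulrA.
have dX : d B X = d B theta * Dp * thinv + theta * d B Dp * thinv - X * d B theta * thinv.
  rewrite /X (dM0 hTD hTi) (dM0 hT hD) dTi.
  by rewrite !mulrDl !mulrN !mulrA.
have dphi' : d B phi' = a + d B X by rewrite /phi' dB hdC subr0 dD.
have E1 : db B X = d B phi' * X - X * a.
  rewrite /X (dbM0 hTD hTi) (dbM0 hT hD) dbTi hdT hdD dphi' dX /X -/a.
  rewrite !(mulrDl, mulrDr, mulrBl, mulrBr, mulrN, mulNr, opprD, opprK, mulrA).
  rewrite -!(mulrA _ thinv theta) !hTiT !mulr1 -!(mulrA _ theta thinv) !hTTi !mulr1.
  by rewrite !addrA addrAC.
split=> //.
have hY : deg B 1 (a + d B X) by apply: degD => //; exact: d_deg.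
have E2 : db B (d B X) = - d B (db B X).
  by apply/esym/eqP; rewrite eqr_oppLR -addr_eq0 d_db_anti.
rewrite dphi' dbD E2 E1 dphi' dB (dM1 hY hX) (dM0 hX ha) dD dd /a dd add0r mul0r.
rewrite -/a hdp mulr0 addr0 !(mulrDl, mulrDr, opprD, opprK, sub0r).
rewrite ?oppr0 -/a !addrA. rewrite (_ : forall x : Om, x + 0 = x); last by move=> x; rewrite addr0.
by rewrite (addrAC _ (d B X * d B X)).
Qed.
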